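(* Let $G$ be a simple graph with $m \ge 4$ edges, and let $\Delta_1 \ge \dots \ge \Delta_m$ and $\psi_1,\dots,\psi_m$ be as defined below. Then for no $k$ with $4 \le k \le m$ does $G$ satisfy both $q(G) < \min\{\psi_i : 1 \le i \le k-1\}$ and $q(G) = \psi_k$.
   Context: $q(G)$ denotes the largest eigenvalue of the signless Laplacian $D + A$ of $G$. For each edge $uv$ of $G$ put $d_u + d_v - 2$, and let $\Delta_1 \ge \dots \ge \Delta_m$ be these numbers in non-increasing order. For $1 \le k \le m$, \[ \psi_k := 1 + \frac{\Delta_k + 1 + \sqrt{(\Delta_k+1)^2 + 4\sum_{i=1}^{k-1}(\Delta_i - \Delta_k)}}{2}. \] It holds that $q(G) \le \psi_k$ for all $k$, with equality iff $\Delta_1 = \Delta_m$ or there exists $2 \le t \le k$ with $m-1 = \Delta_1 = \Delta_{t-1} > \Delta_t = \Delta_m$. *)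

(* Defs.v *)
From HB Require Import structures.
From mathcomp Require Import all_boot all_order all_algebra.
Set Implicit Arguments. Unset Strict Implicit. Unset Printing Implicit Defensive.
Import Order.TTheory GRing.Theory Num.Theory.

(* A simple graph on vertex set 'I_n is a symmetric irreflexive relation e. *)

Definition edges (n : nat) (e : rel 'I_n) : {set {set 'I_n}} :=
  [set [set x; y] | x in 'I_n, y in 'I_n & e x y].

Definition nedges (n : nat) (e : rel 'I_n) : nat := #|edges e|.

Definition deg (n : nat) (e : rel 'I_n) (u : 'I_n) : nat := #|[set v | e u v]|.

Definition edge_val (n : nat) (e : rel 'I_n) (s : {set 'I_n}) : nat :=
  (\sum_(u in s) deg e u) - 2.

Definition Deltas (n : nat) (e : rel 'I_n) : seq nat :=
  sort geq [seq edge_val e s | s <- enum (edges e)].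

(* Delta_k, 1-indexed *)
Definition Delta (n : nat) (e : rel 'I_n) (k : nat) : nat := nth 0 (Deltas e) k.-1.

Local Open Scope ring_scope.

Definition psi (R : rcfType) (n : nat) (e : rel 'I_n) (k : nat) : R :=
  let Dk : R := (Delta e k)%:R in
  1 + (Dk + 1 + Num.sqrt ((Dk + 1) ^+ 2
        + 4 * \sum_(1 <= i < k) ((Delta e i)%:R - Dk))) / 2.

Definition adjmx (R : rcfType) (n : nat) (e : rel 'I_n) : 'M[R]_n :=
  \matrix_(i, j) (e i j)%:R.
Definition degmx (R : rcfType) (n : nat) (e : rel 'I_n) : 'M[R]_n :=
  \matrix_(i, j) ((i == j)%:R * (deg e i)%:R).
Definition signlessLap (R : rcfType) (n : nat) (e : rel 'I_n) : 'M[R]_n :=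
  degmx R e + adjmx R e.

Definition is_q (R : rcfType) (n : nat) (e : rel 'I_n) (q : R) : Prop :=
  eigenvalue (signlessLap R e) q /\
  forall a : R, eigenvalue (signlessLap R e) a -> a <= q.

(* Main.v *)
Require Import Defs.
From HB Require Import structures.
From mathcomp Require Import all_boot all_order all_algebra.
From mathcomp Require Import zify ring lra.
Set Implicit Arguments. Unset Strict Implicit. Unset Printing Implicit Defensive.
Import Order.TTheory GRing.Theory Num.Theory.
Module M_A.

Section Comb.
Variables (n : nat) (e : rel 'I_n) (esym : symmetric e) (eirr : irreflexive e).

Local Notation E := (edges e).

Lemma edgesP s : reflect (exists u v, e u v /\ s = [set u; v]) (s \in E).
Proof.
apply: (iffP imset2P).
  by case=> u v _; rewrite inE => huv ->; exists u, v.
by case=> u [v [huv ->]]; exists u v => //; rewrite inE.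
Qed.

Lemma e_neq u v : e u v -> u != v.
Proof. by move=> h; apply/eqP=> eq; move: h; rewrite eq eirr. Qed.

Definition N (f : {set 'I_n}) := [set g in E | (g != f) && (f :&: g != set0)].

Lemma N_sym f g : f \in E -> g \in E -> (g \in N f) = (f \in N g).
Proof. by move=> fE gE; rewrite !inE fE gE /= eq_sym setIC. Qed.

Lemma NE f g : g \in N f -> g \in E.
Proof. by rewrite inE => /andP[]. Qed.

Lemma meetP (A B : {set 'I_n}) : reflect (exists x, x \in A /\ x \in B) (A :&: B != set0).
Proof.
apply: (iffP (set0Pn _)).
  by case=> x; rewrite inE => /andP[? ?]; exists x.
by case=> x [? ?]; exists x; rewrite inE; apply/andP.
Qed.

Lemma set2_eq (a b c d : 'I_n) : a != b -> [set a; b] = [set c; d] ->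
  (a == c) && (b == d) || (a == d) && (b == c).
Proof.
move=> ab eq.
have ha : a \in [set c; d] by rewrite -eq !inE eqxx.
have hb : b \in [set c; d] by rewrite -eq !inE eqxx orbT.
have hc : c \in [set a; b] by rewrite eq !inE eqxx.
have hd : d \in [set a; b] by rewrite eq !inE eqxx orbT.
move: ha hb hc hd; rewrite !inE.
case/orP=> /eqP ?; case/orP=> /eqP ?; subst; rewrite ?eqxx ?orbT //=;
  try by rewrite eqxx in ab.
all: by move=> _ _; rewrite eq_sym andbb orbb; apply: contraNneq ab => ->.
Qed.

Lemma set2C (a b : 'I_n) : [set a; b] = [set b; a].
Proof. exact: setUC. Qed.

Definition Nu (u v : 'I_n) := [set w | e u w & w != v].

Lemma N_split u v : e u v ->
  N [set u; v] = [set [set u; w] | w in Nu u v] :|: [set [set v; w] | w in Nu v u].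
Proof.
move=> huv; have uv := e_neq huv.
apply/setP=> g; apply/idP/idP.
  rewrite inE => /andP[/edgesP[a [b [hab ->]]] /andP[neq /meetP[x [hx1 hx2]]]].
  have ab := e_neq hab.
  rewrite !inE in hx1 hx2.
  rewrite inE; apply/orP.
  case/orP: hx1 => /eqP ?; case/orP: hx2 => /eqP ?; subst.
  - left; apply/imsetP; exists b => //.
    by rewrite inE hab /=; apply: contra neq => /eqP ->.
  - left; apply/imsetP; exists a; last by rewrite set2C.
    by rewrite inE esym hab /=; apply: contra neq => /eqP ->; rewrite set2C.
  - right; apply/imsetP; exists b => //.
    by rewrite inE hab /=; apply: contra neq => /eqP ->; rewrite set2C.
  - right; apply/imsetP; exists a; last by rewrite set2C.
    by rewrite inE esym hab /=; apply: contra neq => /eqP ->.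
rewrite inE => /orP[] /imsetP[w]; rewrite inE => /andP[hw wn] ->.
  rewrite inE; apply/and3P; split.
  - by apply/edgesP; exists u, w.
  - apply/negP=> /eqP /set2_eq. case/(_ (e_neq hw))/orP => /andP[/eqP a1 /eqP a2].
      by rewrite a2 eqxx in wn.
    by rewrite a1 eqxx in uv.
  - by apply/meetP; exists u; rewrite !inE !eqxx.
rewrite inE; apply/and3P; split.
- by apply/edgesP; exists v, w.
- apply/negP=> /eqP /set2_eq. case/(_ (e_neq hw))/orP => /andP[/eqP a1 /eqP a2].
    by rewrite a1 eqxx in uv.
  by rewrite a2 eqxx in wn.
- by apply/meetP; exists v; rewrite !inE !eqxx orbT.
Qed.


Lemma Nu_inj u v : {in Nu u v &, injective (fun w => [set u; w])}.
Proof.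
move=> w1 w2; rewrite !inE => /andP[h1 _] /andP[h2 _] /set2_eq.
case/(_ (e_neq h1))/orP => /andP[/eqP a1 /eqP a2] //.
by move: h1; rewrite -a2 eirr.
Qed.

Lemma N_disj u v : e u v ->
  [disjoint [set [set u; w] | w in Nu u v] & [set [set v; w] | w in Nu v u]].
Proof.
move=> huv; rewrite -setI_eq0; apply/eqP/setP => g; rewrite !inE.
apply/negP => /andP[/imsetP[w1 h1 ->] /imsetP[w2 h2 /set2_eq]].
move: h1 h2; rewrite !inE => /andP[h1 n1] /andP[h2 n2].
case/(_ (e_neq h1))/orP => /andP[/eqP a1 /eqP a2].
  by move: (e_neq huv); rewrite a1 eqxx.
by move: n1; rewrite a2 eqxx.
Qed.

Lemma N_sum (R : nmodType) u v (F : {set 'I_n} -> R) : e u v ->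
  (\sum_(g in N [set u; v]) F g =
  \sum_(w in Nu u v) F [set u; w] + \sum_(w in Nu v u) F [set v; w])%R.
Proof.
move=> huv; rewrite (N_split huv).
rewrite (eq_bigl [predU [set [set u; w] | w in Nu u v] & [set [set v; w] | w in Nu v u]]);
  last by move=> g; rewrite !inE.
rewrite bigU ?N_disj // !big_imset //; exact: Nu_inj.
Qed.

Lemma card_Nu u v : e u v -> #|Nu u v| = (deg e u).-1.
Proof.
move=> huv; rewrite /deg (cardsD1 v [set w | e u w]) inE huv /=.
have -> : [set w | e u w] :\ v = Nu u v by apply/setP=> w; rewrite !inE andbC.
by [].
Qed.

Lemma esym_sym u v : e u v -> e v u.
Proof. by rewrite esym. Qed.

Lemma card_N u v : e u v -> #|N [set u; v]| = edge_val e [set u; v].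
Proof.
move=> huv; rewrite -sum1_card (N_sum _ huv) !sum1_card (card_Nu huv).
rewrite (card_Nu (esym_sym huv)) /edge_val big_setU1 ?big_set1 /=; last first.
  by rewrite inE (e_neq huv).
have : (0 < deg e u)%N by rewrite /deg; apply/card_gt0P; exists v; rewrite inE.
have : (0 < deg e v)%N.
  by rewrite /deg; apply/card_gt0P; exists u; rewrite inE esym.
lia.
Qed.


Lemma edge_at A x : A \in E -> x \in A -> exists a, e x a /\ A = [set x; a].
Proof.
case/edgesP=> u [v [huv ->]]; rewrite !inE => /orP[] /eqP ->.
  by exists v.
by exists u; rewrite esym set2C.
Qed.

Lemma edge2 F a b : F \in E -> a != b -> a \in F -> b \in F -> F = [set a; b].
Proof.
move=> FE ab aF bF; case: (edge_at FE aF) => t [hat eF].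
move: bF; rewrite eF !inE => /orP[/eqP ba|/eqP -> //].
by rewrite ba eqxx in ab.
Qed.

Lemma common_in x A B C F : A \in E -> B \in E -> C \in E -> F \in E ->
  A != B -> A != C -> B != C ->
  x \in A -> x \in B -> x \in C ->
  A :&: F != set0 -> B :&: F != set0 -> C :&: F != set0 -> x \in F.
Proof.
move=> AE BE CE FE AB AC BC xA xB xC mA mB mC.
apply/negPn/negP => xF.
case: (edge_at AE xA) => a [ha eA].
case: (edge_at BE xB) => b [hb eB].
case: (edge_at CE xC) => c [hc eC].
have get : forall t, [set x; t] :&: F != set0 -> t \in F.
  move=> t /meetP[y [yin yF]]; move: yin; rewrite !inE => /orP[] /eqP ey.
    by move: yF; rewrite ey (negbTE xF).
  by rewrite -ey.
have aF : a \in F by apply: get; rewrite -eA.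
have bF : b \in F by apply: get; rewrite -eB.
have cF : c \in F by apply: get; rewrite -eC.
case: (edge_at FE aF) => f [_ eF].
move: bF cF; rewrite eF !inE.
have ab : a != b by apply: contraNneq AB => ab; rewrite eA eB ab.
have ac : a != c by apply: contraNneq AC => ac; rewrite eA eC ac.
have bc : b != c by apply: contraNneq BC => bc; rewrite eB eC bc.
rewrite [b == a]eq_sym [c == a]eq_sym (negbTE ab) (negbTE ac) /= => /eqP bf /eqP cf.
by rewrite bf cf eqxx in bc.
Qed.


Lemma has_common A B C F : A \in E -> B \in E -> C \in E -> F \in E ->
  A != B -> A != C -> B != C -> F != A -> F != B -> F != C ->
  A :&: B != set0 -> A :&: C != set0 -> B :&: C != set0 ->
  A :&: F != set0 -> B :&: F != set0 -> C :&: F != set0 ->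
  exists x, [/\ x \in A, x \in B & x \in C].
Proof.
move=> AE BE CE FE AB AC BC FA FB FC /meetP[x [xA xB]] mAC mBC mAF mBF mCF.
case xC: (x \in C); first by exists x.
exfalso.
case: (edge_at AE xA) => a [ha eA].
case: (edge_at BE xB) => b [hb eB].
have ab : a != b by apply: contraNneq AB => ab; rewrite eA eB ab.
have get : forall t (G : {set 'I_n}), x \notin G -> [set x; t] :&: G != set0 -> t \in G.
  move=> t G xG /meetP[y [yin yG]]; move: yin; rewrite !inE => /orP[] /eqP ey.
    by move: yG; rewrite ey (negbTE xG).
  by rewrite -ey.
have aC : a \in C by apply: (get a C (negbT xC)); rewrite -eA.
have bC : b \in C by apply: (get b C (negbT xC)); rewrite -eB.
have eC := edge2 CE ab aC bC.
case xF: (x \in F).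
  case: (edge_at FE xF) => t [ht eF].
  have : t \in C.
    case/meetP: mCF => z [zC]; rewrite eF !inE => /orP[] /eqP ez.
      by rewrite -ez zC in xC.
    by rewrite -ez.
  rewrite eC !inE => /orP[] /eqP et.
    by rewrite eF eA et eqxx in FA.
  by rewrite eF eB et eqxx in FB.
have aF : a \in F by apply: (get a F (negbT xF)); rewrite -eA.
have bF : b \in F by apply: (get b F (negbT xF)); rewrite -eB.
by rewrite (edge2 FE ab aF bF) -eC eqxx in FC.
Qed.

Lemma clique3 h1 h2 h3 f g : f \in E -> g \in E ->
  h2 \in N h1 -> h3 \in N h1 -> h3 \in N h2 ->
  h1 \in N f -> h2 \in N f -> h3 \in N f ->
  h1 \in N g -> h2 \in N g -> h3 \in N g -> f != g -> g \in N f.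
Proof.
move=> fE gE.
rewrite !inE => /and3P[h2E n21 m12] /and3P[h3E n31 m13] /and3P[_ n32 m23].
move=> /and3P[h1E n1f mf1] /and3P[_ n2f mf2] /and3P[_ n3f mf3].
move=> /and3P[_ n1g mg1] /and3P[_ n2g mg2] /and3P[_ n3g mg3] fg.
rewrite gE eq_sym fg /=.
have [x [x1 x2 x3]] : exists x, [/\ x \in h1, x \in h2 & x \in h3].
  apply: (has_common (F := f)) => //; first [done | by rewrite eq_sym | by rewrite setIC].
have xf : x \in f.
  apply: (common_in (A:=h1) (B:=h2) (C:=h3)) => //; first [done | by rewrite eq_sym | by rewrite setIC].
have xg : x \in g.
  apply: (common_in (A:=h1) (B:=h2) (C:=h3)) => //; first [done | by rewrite eq_sym | by rewrite setIC].
by apply/meetP; exists x.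
Qed.

End Comb.

End M_A.
Import M_A.

Module M_B.

Section Sort.
Variables (n : nat) (e : rel 'I_n).
Local Notation E := (edges e).
Local Notation ds := (Deltas e).

Lemma size_ds : size ds = nedges e.
Proof. by rewrite /Deltas size_sort size_map /nedges cardE. Qed.

Lemma perm_ds : perm_eq ds [seq edge_val e s | s <- enum E].
Proof. by rewrite /Deltas perm_sort. Qed.

Lemma sorted_ds : sorted geq ds.
Proof. by apply: sort_sorted => x y; exact: leq_total. Qed.

Lemma nth_ds_ge i j : (i <= j < nedges e)%N -> (nth 0 ds j <= nth 0 ds i)%N.
Proof.
move=> /andP[ij jm].
apply: (@sorted_leq_nth _ geq _ _ 0 ds sorted_ds i j) => //.
- by move=> a b c /= h1 h2; exact: leq_trans h2 h1.
- by move=> a /=.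
- by rewrite unfold_in /= size_ds; lia.
- by rewrite unfold_in /= size_ds.
Qed.

Definition Ssum (K : nat) : nat := \sum_(f in E) (edge_val e f - K).

Lemma Ssum_ds K : Ssum K = \sum_(0 <= j < nedges e) (nth 0 ds j - K).
Proof.
rewrite -size_ds -(big_nth 0 predT (fun x => x - K)) (perm_big _ perm_ds) big_map.
by rewrite /Ssum big_enum.
Qed.

Lemma Ssum_k k : (1 <= k <= nedges e)%N ->
  Ssum (Delta e k) = \sum_(0 <= j < k.-1) (nth 0 ds j - Delta e k).
Proof.
move=> /andP[k1 km]; rewrite Ssum_ds (big_cat_nat _ (n := k.-1)) //=; last by lia.
rewrite [X in (_ + X)%N]big1_seq ?addn0 // => j; rewrite mem_index_iota => /andP[j1 j2].
apply/eqP; rewrite subn_eq0 /Delta; apply: nth_ds_ge; lia.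
Qed.

Lemma sum_ds (F : nat -> nat) :
  \sum_(f in E) F (edge_val e f) = \sum_(0 <= j < nedges e) F (nth 0 ds j).
Proof.
rewrite -size_ds -(big_nth 0 predT F) (perm_big _ perm_ds) big_map.
by rewrite big_enum.
Qed.

Lemma card_H k : (1 <= k <= nedges e)%N ->
  (forall i, (1 <= i <= k.-1)%N -> (Delta e k < Delta e i)%N) ->
  (k.-1 <= #|[set f in E | (Delta e k < edge_val e f)%N]|)%N.
Proof.
move=> /andP[k1 km] hi.
rewrite -sum1_card (eq_bigl (fun f => (f \in E) && (Delta e k < edge_val e f)%N));
  last by move=> f; rewrite inE.
rewrite big_mkcondr /=.
rewrite (eq_bigr (fun f => (fun x => nat_of_bool (Delta e k < x)%N) (edge_val e f)));
  last by move=> f _; case: ifP.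
rewrite (sum_ds (fun x => nat_of_bool (Delta e k < x)%N)).
rewrite (big_cat_nat _ (n := k.-1)) //=; last by lia.
apply: leq_trans (leq_addr _ _).
rewrite (eq_big_nat _ _ (F2 := fun _ => 1%N)); first by rewrite sum_nat_const_nat muln1 subn0.
move=> j /andP[_ jk]; have := hi j.+1; rewrite /Delta /= => ->; lia.
Qed.

Lemma Delta1_in : (0 < nedges e)%N -> exists2 f, f \in E & edge_val e f = Delta e 1.
Proof.
move=> m0.
have : Delta e 1 \in [seq edge_val e s | s <- enum E].
  rewrite -(perm_mem perm_ds) /Delta /=; apply: mem_nth; by rewrite size_ds.
by case/mapP=> f; rewrite mem_enum => fE ->; exists f.
Qed.

Local Open Scope ring_scope.

Lemma sumDelta (R : rcfType) k : (1 <= k <= nedges e)%N ->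
  \sum_(1 <= i < k) ((Delta e i)%:R - (Delta e k)%:R : R) = (Ssum (Delta e k))%:R.
Proof.
move=> hk; rewrite (Ssum_k hk) natr_sum.
case: k hk => [|k] hk //=.
rewrite big_add1 /=.
apply: eq_big_nat => i /andP[_ ik].
rewrite natrB // /Delta /=; apply: nth_ds_ge; lia.
Qed.

Definition Phi (R : rcfType) (K : nat) : R :=
  1 + (K%:R + 1 + Num.sqrt ((K%:R + 1) ^+ 2 + 4 * (Ssum K)%:R)) / 2.

Lemma psiE (R : rcfType) k : (1 <= k <= nedges e)%N -> psi R e k = Phi R (Delta e k).
Proof. by move=> hk; rewrite /psi /Phi sumDelta. Qed.


Lemma psi1 (R : rcfType) : psi R e 1 = (Delta e 1)%:R + 2.
Proof.
rewrite /psi big_geq // mulr0 addr0 sqrtr_sqr ger0_norm; last by rewrite addr_ge0.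
have h : (2 : R) != 0 by rewrite pnatr_eq0.
by field.
Qed.

End Sort.

End M_B.
Import M_B.

Module M_C.

Section Spec.
Variables (R : rcfType) (n : nat) (e : rel 'I_n) (esym : symmetric e) (eirr : irreflexive e).
Local Notation E := (edges e).
Local Notation N := (@N n e).
Local Open Scope ring_scope.

Lemma sum_sym (phi psi : {set 'I_n} -> R) :
  \sum_(f in E) phi f * \sum_(g in N f) psi g =
  \sum_(g in E) psi g * \sum_(f in N g) phi f.
Proof.
have ex : forall (F : {set 'I_n} -> R) f, \sum_(g in N f) F g =
    \sum_(g in E) (if g \in N f then F g else 0).
  move=> F f; rewrite -big_mkcondr; apply: eq_bigl => g.
  by case: (boolP (g \in N f)) => [h|_]; rewrite ?andbF ?andbT // (NE h).
under eq_bigr do rewrite ex mulr_sumr.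
under [RHS]eq_bigr do rewrite ex mulr_sumr.
rewrite exchange_big /=; apply: eq_bigr => g gE; apply: eq_bigr => f fE.
rewrite (N_sym fE gE).
by case: (f \in N g); rewrite ?mulr0 // mulrC.
Qed.

Variables (X : 'I_n -> R) (q : R).
Hypothesis X0 : forall u, 0 <= X u.
Hypothesis subinv : forall u,
  q * X u <= (deg e u)%:R * X u + \sum_(w in [set w | e u w]) X w.

Definition y (f : {set 'I_n}) := \sum_(x in f) X x.
Definition Ay f := \sum_(g in N f) y g.

Lemma y0 f : 0 <= y f.
Proof. by apply: sumr_ge0 => x _. Qed.

Lemma y2 u v : u != v -> y [set u; v] = X u + X v.
Proof. by move=> uv; rewrite /y big_setU1 ?big_set1 // inE. Qed.

Lemma sum_Nu u v : e u v -> \sum_(w in Nu e u v) y [set u; w] =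
  ((deg e u)%:R - 1) * X u + (\sum_(w in [set w | e u w]) X w - X v).
Proof.
move=> huv.
rewrite (eq_bigr (fun w => X u + X w)); last first.
  by move=> w; rewrite inE => /andP[h _]; rewrite y2 // (e_neq eirr h).
rewrite big_split /= sumr_const (card_Nu huv).
rewrite [in RHS](bigD1 v) ?inE //=.
rewrite [in RHS](eq_bigl (fun w => w \in Nu e u v)); last by move=> w; rewrite !inE.
have : (0 < deg e u)%N by rewrite /deg; apply/card_gt0P; exists v; rewrite inE.
case: (deg e u) => // d _ /=.
rewrite -mulr_natl -natr1; ring.
Qed.

Lemma Ay_ge f : f \in E -> (q - 2) * y f <= Ay f.
Proof.
case/edgesP=> u [v [huv ->]].
rewrite /Ay (N_sum esym eirr _ huv) (sum_Nu huv) (sum_Nu (esym_sym esym huv)).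
rewrite y2 ?(e_neq eirr huv) //.
have := subinv u; have := subinv v; lra.
Qed.


Definition Dv (f : {set 'I_n}) : R := (edge_val e f)%:R.

Lemma N1 g : g \in E -> \sum_(f in N g) (1 : R) = Dv g.
Proof.
case/edgesP=> u [v [huv ->]].
by rewrite sumr_const (card_N esym eirr huv) /Dv.
Qed.

Variable K : nat.
Definition pos f : R := ((edge_val e f - K)%N)%:R.
Definition SS : R := (Ssum e K)%:R.
Definition rr g := \sum_(f in N g) (Dv f - (K%:R - 1)).
Definition rest g := \sum_(f in (E :\: N g) :\ g) pos f.

Lemma pos0 f : 0 <= pos f.
Proof. by rewrite /pos ler0n. Qed.

Lemma pos_ge f : Dv f - K%:R <= pos f.
Proof.
rewrite /Dv /pos; case: (leqP K (edge_val e f)) => h.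
  by rewrite (natrB R h).
have : (edge_val e f)%:R <= K%:R :> R by rewrite ler_nat ltnW.
have := ler0n R (edge_val e f - K); lra.
Qed.

Lemma pos_ge2 f : Dv f <= K%:R + pos f.
Proof. by rewrite /Dv /pos -natrD ler_nat; lia. Qed.

Lemma SS_E : SS = \sum_(f in E) pos f.
Proof. by rewrite /SS /Ssum natr_sum. Qed.

Lemma row_bound g : g \in E -> rr g + rest g <= K%:R + SS.
Proof.
move=> gE.
have r1 : rr g = \sum_(f in N g) (Dv f - K%:R) + Dv g.
  rewrite -(N1 gE) -big_split /=; apply: eq_bigr => f _; ring.
have s1 : SS = \sum_(f in N g) pos f + (pos g + rest g).
  rewrite SS_E (big_setID (N g)) /=.
  have -> : E :&: N g = N g by apply/setIidPr/subsetP => f; exact: NE.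
  rewrite [X in _ + X = _](big_setD1 g) //.
  rewrite !inE gE andbT; apply/negP => /and3P[_]; rewrite eqxx.
  by [].
have h1 : \sum_(f in N g) (Dv f - K%:R) <= \sum_(f in N g) pos f.
  by apply: ler_sum => f _; exact: pos_ge.
have h2 := pos_ge2 g.
rewrite r1 s1; lra.
Qed.

Lemma rest0 g : 0 <= rest g.
Proof. by apply: sumr_ge0 => f _; exact: pos0. Qed.


Lemma chain : K%:R - 1 < q - 2 ->
  (q - 2) ^+ 2 - (K%:R - 1) * (q - 2) = K%:R + SS ->
  (forall g, g \in E -> Ay g = (q - 2) * y g) /\
  (forall g, g \in E -> 0 < y g -> rest g = 0).
Proof.
set l := q - 2; set c := K%:R - 1 => hlc heq.
pose z g := Ay g - l * y g.
have z0 : forall g, g \in E -> 0 <= z g.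
  by move=> g gE; rewrite /z subr_ge0; exact: Ay_ge.
pose term g := y g * (K%:R + SS - rr g - rest g) + y g * rest g + (l - c) * z g + Dv g * z g.
have t4 : forall g, g \in E -> [/\ 0 <= y g * (K%:R + SS - rr g - rest g),
    0 <= y g * rest g, 0 <= (l - c) * z g & 0 <= Dv g * z g].
  move=> g gE; have := row_bound gE; have := rest0 g; have := y0 g; have := z0 g gE.
  have : 0 <= Dv g by rewrite /Dv ler0n.
  move=> h1 h2 h3 h4 h5; split.
  - by apply: mulr_ge0 => //; lra.
  - exact: mulr_ge0.
  - by apply: mulr_ge0 => //; lra.
  - exact: mulr_ge0.
have t0 : forall g, g \in E -> 0 <= term g.
  by move=> g gE; case: (t4 g gE) => *; rewrite /term; lra.
pose A1 := \sum_(f in E) Ay f.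
pose A2 := \sum_(f in E) Dv f * Ay f.
pose B1 := \sum_(f in E) y f.
pose B2 := \sum_(f in E) Dv f * y f.
have eA1 : A1 = B2.
  rewrite /A1 /B2; have := sum_sym (fun _ => 1) y.
  under eq_bigr do rewrite mul1r.
  move=> ->; apply: eq_bigr => g gE; rewrite (N1 gE) mulrC //.
have eyr : \sum_(g in E) y g * rr g = A2 - c * A1.
  rewrite /rr -(sum_sym (fun f => Dv f - c) y) /A2 /A1 mulr_sumr -sumrB.
  by apply: eq_bigr => f _; rewrite /Ay; ring.
have sum0 : \sum_(g in E) term g = 0.
  rewrite (eq_bigr (fun g => (K%:R+SS) * y g - y g * rr g + (l - c) * Ay g
      - (l-c) * l * y g + Dv g * Ay g - l * (Dv g * y g))); last first.
    by move=> g _; rewrite /term /z; ring.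
  rewrite !(sumrB, big_split) /= -!mulr_sumr.
  rewrite eyr /A2 /A1 /B2 in eA1 *.
  rewrite eA1 -!mulrA -heq; ring.
have tz : forall g, g \in E -> term g = 0.
  by move=> g gE; apply: (psumr_eq0P t0 sum0).
split.
- move=> g gE; have := tz g gE; case: (t4 g gE); rewrite /term => h1 h2 h3 h4 h5.
  have : (l - c) * z g = 0 by lra.
  move/eqP; rewrite mulf_eq0 => /orP[/eqP|/eqP]; first by lra.
  by rewrite /z; lra.
- move=> g gE yp; have := tz g gE; case: (t4 g gE); rewrite /term => h1 h2 h3 h4 h5.
  have : y g * rest g = 0 by lra.
  move/eqP; rewrite mulf_eq0 => /orP[/eqP|/eqP] //; lra.
Qed.


Lemma cardN f : f \in E -> (#|N f|)%:R = Dv f :> R.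
Proof. by case/edgesP=> u [v [huv ->]]; rewrite (card_N esym eirr huv). Qed.

Lemma structure (f0 h1 h2 h3 f1 : {set 'I_n}) :
  0 < q - 2 ->
  (forall g, g \in E -> Ay g = (q - 2) * y g) ->
  (forall g, g \in E -> 0 < y g -> rest g = 0) ->
  f0 \in E -> 0 < y f0 ->
  h1 \in E -> h2 \in E -> h3 \in E -> f1 \in E ->
  (K < edge_val e h1)%N -> (K < edge_val e h2)%N -> (K < edge_val e h3)%N ->
  (K < edge_val e f1)%N ->
  h1 != h2 -> h1 != h3 -> h2 != h3 ->
  q - 2 = Dv f1.
Proof.
set l := q - 2 => lpos Ayeq resteq f0E yf0 h1E h2E h3E f1E k1 k2 k3 kf1 d12 d13 d23.
have adj : forall g h, g \in E -> 0 < y g -> h \in E -> h != g ->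
    (K < edge_val e h)%N -> h \in N g.
  move=> g h gE yg hE hg kh; apply/negPn/negP => hN.
  have := resteq g gE yg; rewrite /rest (big_setD1 h) /=; last first.
    by rewrite in_setD1 in_setD hg hN hE.
  have : 0 < pos h by rewrite /pos ltr0n subn_gt0.
  have : 0 <= \sum_(i in (E :\: N g) :\ g :\ h) pos i.
    by apply: sumr_ge0 => i _; exact: pos0.
  lra.
have clos : forall g f, g \in E -> 0 < y g -> f \in N g -> 0 < y f.
  move=> g f gE yg fN; have fE := NE fN.
  have gN : g \in N f by rewrite (N_sym fE gE).
  have : y g <= Ay f.
    rewrite /Ay (big_setD1 g) //=.
    have : 0 <= \sum_(i in N f :\ g) y i by apply: sumr_ge0 => i _; exact: y0.
    lra.
  rewrite Ayeq // => hle.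
  have : 0 < l * y f by lra.
  by rewrite pmulr_rgt0.
pose P := [set f in E | 0 < y f].
have PE : forall f, f \in P -> f \in E by move=> f; rewrite inE => /andP[].
have Py : forall f, f \in P -> 0 < y f by move=> f; rewrite inE => /andP[].
have HP : forall h, h \in E -> (K < edge_val e h)%N -> h \in P.
  move=> h hE kh; case: (eqVneq h f0) => [->|hf]; first by rewrite inE f0E.
  by rewrite inE hE (clos f0 h) // adj.
have clq : forall f g, f \in P -> g \in P -> f != g -> g \in N f.
  move=> f g fP gP fg.
  case: (ltnP K (edge_val e g)) => kg.
    by apply: adj => //; [exact: PE | exact: Py | exact: PE | rewrite eq_sym].
  case: (ltnP K (edge_val e f)) => kf.
    rewrite (N_sym (PE f fP) (PE g gP)); apply: adj => //; [exact: PE | exact: Py | exact: PE].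
  have hne : forall h x, (K < edge_val e h)%N -> (edge_val e x <= K)%N -> h != x.
    by move=> h x a b; apply/eqP => ehx; move: a; rewrite ehx ltnNge b.
  have fE := PE f fP; have gE := PE g gP.
  have h1P := HP h1 h1E k1; have h2P := HP h2 h2E k2.
  apply: (clique3 esym (h1 := h1) (h2 := h2) (h3 := h3)) => //;
    apply: adj => //; try exact: Py; try (by apply: hne); by rewrite eq_sym.
have NP : forall f, f \in P -> N f = P :\ f.
  move=> f fP; apply/setP => g; rewrite in_setD1; apply/idP/idP.
    move=> gN; have gE := NE gN.
    rewrite inE gE (clos f g) ?(PE f fP) ?(Py f fP) // andbT.
    by move: gN; rewrite !inE => /and3P[_ ->].
  by move=> /andP[gf gP]; apply: clq => //; rewrite eq_sym.
pose YP := \sum_(f in P) y f.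
have eqf : forall f, f \in P -> (l + 1) * y f = YP.
  move=> f fP; have := Ayeq f (PE f fP); rewrite /Ay (NP f fP) /YP (big_setD1 f fP) /=.
  move=> h; rewrite h; ring.
have f0P : f0 \in P by rewrite inE f0E.
have YP0 : 0 < YP.
  rewrite /YP (big_setD1 f0 f0P) /=.
  have : 0 <= \sum_(i in P :\ f0) y i by apply: sumr_ge0 => i _; exact: y0.
  have := Py f0 f0P; lra.
have hP : (l + 1) * YP = (#|P|)%:R * YP.
  rewrite {1}/YP mulr_sumr (eq_bigr (fun _ => YP)); last by move=> f fP; rewrite eqf.
  by rewrite sumr_const mulr_natl.
have l1 : l + 1 = (#|P|)%:R.
  by apply: (mulIf (x := YP)) => //; rewrite gt_eqF.
have f1P := HP f1 f1E kf1.
rewrite -(cardN f1E) (NP f1 f1P).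
move: l1; rewrite (cardsD1 f1 P) f1P add1n -natr1; lra.
Qed.

End Spec.

End M_C.
Import M_C.
Local Open Scope ring_scope.

Lemma three_elems (T : finType) (A : {set T}) : (3 <= #|A|)%N ->
  exists a b c, [/\ a \in A, b \in A, c \in A & [/\ a != b, a != c & b != c]].
Proof.
move=> h.
have : (0 < #|A|)%N by lia.
case/card_gt0P => a aA.
have : (0 < #|A :\ a|)%N by move: h; rewrite (cardsD1 a A) aA; lia.
case/card_gt0P => b; rewrite in_setD1 => /andP[ba bA].
have : (0 < #|A :\ a :\ b|)%N.
  by move: h; rewrite (cardsD1 a A) aA (cardsD1 b (A :\ a)) in_setD1 ba bA; lia.
case/card_gt0P => c; rewrite !in_setD1 => /and3P[cb ca cA].
exists a, b, c; split => //; split; by rewrite // eq_sym.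
Qed.

Lemma eig_eq (R : rcfType) n (e : rel 'I_n) (esym : symmetric e) (v : 'rV[R]_n) q :
  v *m signlessLap R e = q *: v -> forall u,
  q * v ord0 u = (deg e u)%:R * v ord0 u + \sum_(w in [set w | e u w]) v ord0 w.
Proof.
move=> hv u.
have := congr1 (fun M : 'M_(1, n) => M ord0 u) hv; rewrite !mxE => <-.
under eq_bigr do rewrite !mxE mulrDr.
rewrite big_split /= (bigD1 u) //= eqxx mul1r.
rewrite big1 ?addr0; last by move=> i /negbTE ->; rewrite mul0r mulr0.
rewrite mulrC; congr (_ + _).
rewrite [RHS]big_mkcond /=; apply: eq_bigr => i _; rewrite inE esym.
by case: (e u i); rewrite ?mulr1 ?mulr0.
Qed.

Lemma subinv_abs (R : rcfType) n (e : rel 'I_n) (esym : symmetric e) (v : 'rV[R]_n) q :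
  0 <= q -> v *m signlessLap R e = q *: v -> forall u,
  q * `|v ord0 u| <= (deg e u)%:R * `|v ord0 u| + \sum_(w in [set w | e u w]) `|v ord0 w|.
Proof.
move=> q0 hv u.
rewrite -{1}(ger0_norm q0) -normrM (eig_eq esym hv).
apply: le_trans (ler_normD _ _) _.
rewrite normrM ger0_norm ?ler0n //; apply: lerD => //.
exact: ler_norm_sum.
Qed.

Lemma Phi_alg (R : rcfType) n (e : rel 'I_n) K (q : R) : q = @Phi n e R K ->
  1 < q /\ (q - 1) * (q - 2 - K%:R) = (Ssum e K)%:R.
Proof.
rewrite /Phi => ->.
set a : R := K%:R + 1; set S : R := (Ssum e K)%:R.
have S0 : 0 <= S by rewrite ler0n.
have a0 : 0 < a by rewrite /a ltr_wpDl ?ler0n.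
have r0 := sqrtr_ge0 (a ^+ 2 + 4 * S).
have r2 : Num.sqrt (a ^+ 2 + 4 * S) ^+ 2 = a ^+ 2 + 4 * S.
  by rewrite sqr_sqrtr // addr_ge0 ?sqr_ge0 // mulr_ge0.
split; first by lra.
have -> : K%:R = a - 1 by rewrite /a; ring.
set r := Num.sqrt _ in r0 r2 *.
have h : (2 : R) != 0 by rewrite pnatr_eq0.
have h4 : (4 : R) != 0 by rewrite pnatr_eq0.
have -> : S = (r ^+ 2 - a ^+ 2) / 4 by rewrite r2; field.
by field.
Qed.

Lemma qK_lem (R : rcfType) (q Kr S : R) : 1 < q -> 1 <= S -> (q - 1) * (q - 2 - Kr) = S ->
  Kr < q - 2.
Proof.
move=> q1 S1 h; rewrite -subr_gt0.
have : 0 < (q - 1) * (q - 2 - Kr) by lra.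
by rewrite pmulr_rgt0 // subr_gt0.
Qed.

Lemma qK_lem2 (R : rcfType) (a b : R) : a < b -> a - 1 < b.
Proof. lra. Qed.

Unset Implicit Arguments.

Theorem mainTheorem3 (R : rcfType) (n : nat) (e : rel 'I_n)
  (esym : symmetric e) (eirr : irreflexive e)
  (hm : (4 <= nedges e)%N) (q : R) (hq : @is_q R n e q) (k : nat)
  (hk : (4 <= k <= nedges e)%N) :
  ~ ((forall i : nat, (1 <= i <= k.-1)%N -> q < @psi R n e i) /\ q = @psi R n e k).
Proof.
case=> hlt hqk.
have hk1 : (1 <= k <= nedges e)%N by lia.
set K := Delta e k.
have qPhi : q = Phi e R K by rewrite hqk psiE.
have strict : forall i, (1 <= i <= k.-1)%N -> (K < Delta e i)%N.
  move=> i hi.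
  have ge : (K <= Delta e i)%N by rewrite /K /Delta; apply: nth_ds_ge; lia.
  rewrite ltn_neqAle ge andbT; apply/negP => /eqP eKi.
  have := hlt i hi; rewrite psiE; last by lia.
  by rewrite -eKi -qPhi ltxx.
have cH := card_H hk1 strict.
have c3 : (3 <= #|[set f in edges e | (K < edge_val e f)%N]|)%N by apply: leq_trans cH; lia.
have [h1 [h2 [h3 [h1H h2H h3H [d12 d13 d23]]]]] := three_elems c3.
move: h1H h2H h3H; rewrite !inE => /andP[h1E k1] /andP[h2E k2] /andP[h3E k3].
have m0 : (0 < nedges e)%N by lia.
have [f1 f1E ef1] := Delta1_in m0.
have kf1 : (K < edge_val e f1)%N by rewrite ef1; apply: strict; lia.
have i1 : (1 <= 1 <= k.-1)%N by lia.
have psi1lt := hlt 1%N i1; rewrite psi1 in psi1lt.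
case: hq => /eigenvalueP [v hv vn0] _.
have [q1 hS] := Phi_alg qPhi.
have q0 : 0 <= q by lra.
pose X u := `|v ord0 u|.
have X0 : forall u, 0 <= X u by move=> u; exact: normr_ge0.
have subinv := subinv_abs esym q0 hv.
have [u vu] : exists u, v ord0 u != 0.
  case: (pickP (fun u => v ord0 u != 0)) => [u hu | h]; first by exists u.
  exfalso; apply: (negP vn0); apply/eqP/rowP => j; rewrite mxE.
  by move/negbFE/eqP: (h j).
have Xu : 0 < X u by rewrite normr_gt0.
have [w huw] : exists w, e u w.
  case: (pickP (fun w => e u w)) => [w hw | h]; first by exists w.
  exfalso; have := subinv u.
  have -> : [set w | e u w] = set0 by apply/setP => w; rewrite !inE h.
  have -> : deg e u = 0%N by rewrite /deg; apply: eq_card0 => w; rewrite inE h.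
  rewrite big_set0 addr0 mulr0n mul0r.
  have : 0 < q * `|v ord0 u| by rewrite mulr_gt0 //; lra.
  lra.
set f0 := [set u; w].
have f0E : f0 \in edges e by apply/edgesP; exists u, w.
have yf0 : 0 < y X f0.
  rewrite /f0 y2 ?(e_neq eirr huw) //; have := X0 w; lra.
have S1 : (1 <= Ssum e K)%N.
  by rewrite /Ssum (bigD1 h1) //=; apply: leq_trans (leq_addr _ _); rewrite subn_gt0.
have S1R : 1 <= (Ssum e K)%:R :> R by rewrite ler1n.
have qK : K%:R < q - 2 by apply: (qK_lem q1 S1R hS).
have hlc : K%:R - 1 < q - 2 by apply: qK_lem2.
have heq : (q - 2) ^+ 2 - (K%:R - 1) * (q - 2) = K%:R + SS R e K.
  rewrite /SS -hS; ring.
have K0 : 0 <= K%:R :> R by rewrite ler0n.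
have lpos : 0 < q - 2 by apply: le_lt_trans qK.
have [Ayeq resteq] := chain esym eirr X0 subinv hlc heq.
have := structure esym eirr X0 lpos Ayeq resteq f0E yf0 h1E h2E h3E f1E k1 k2 k3 kf1 d12 d13 d23.
rewrite /Dv ef1 => hq2.
have : q = (Delta e 1)%:R + 2 by rewrite -hq2; ring.
by move=> qe; rewrite -qe ltxx in psi1lt.
Qed.
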